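(* Let $H$ be a connected false-twin-free graph with $|V(H)|\ge 7$, let $G=KB(H)$, let $q$ be a vertex of $G$ with $d_G(q)=2$, and let $B$ be the biclique of $H$ corresponding to $q$. Then one of the following holds: (1) $B$ induces $K_{1,1}$, say $B=\{v,w\}$ with $vw\in E(H)$, and there is a vertex $x$ with $N[v]=N[w]=\{v,w,x\}$ and such that $N(x)\setminus\{v,w\}$ is an independent set of $H$; (2) $B$ induces $K_{1,2}$, say with center $b$ and leaves $a,c$ (so $ab,bc\in E(H)$, $ac\notin E(H)$), and, after possibly exchanging the names of $a$ and $c$, $N(a)=\{b\}$ and $N(b)=\{a,c\}$.
   Context: All graphs are finite, simple, undirected and connected. A biclique of a graph $H$ is a maximal (with respect to vertex-set inclusion) set of vertices inducing a complete bipartite subgraph $K_{r,s}$ with $r,s\ge 1$. The biclique graph $KB(H)$ is the intersection graph of the family of all bicliques of $H$: its vertices are the bicliques of $H$, and two bicliques are adjacent iff they share at least one vertex. $N(u)$ denotes the open neighborhood of $u$ and $N[u]=N(u)\cup\{u\}$ the closed neighborhood. Two distinct vertices $u,v$ are false-twins if $N(u)=N(v)$; a graph is false-twin-free if it has no pair of false-twins. *)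

(* Defs.v *)
From mathcomp Require Import all_boot.
Set Implicit Arguments. Unset Strict Implicit. Unset Printing Implicit Defensive.

Definition simple_graph (T : finType) (e : rel T) : Prop :=
  symmetric e /\ irreflexive e.

Definition graph_connected (T : finType) (e : rel T) : Prop :=
  forall x y : T, connect e x y.

Definition nbhd (T : finType) (e : rel T) (u : T) : {set T} := [set y | e u y].
Definition cnbhd (T : finType) (e : rel T) (u : T) : {set T} := u |: nbhd e u.

Definition false_twin_free (T : finType) (e : rel T) : Prop :=
  forall u v : T, u != v -> nbhd e u != nbhd e v.

Definition independent (T : finType) (e : rel T) (S : {set T}) : Prop :=
  forall x y, x \in S -> y \in S -> ~~ e x y.

Definition induces_complete_bipartite (T : finType) (e : rel T) (S : {set T}) : Prop :=
  exists X Y : {set T},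
    [/\ X != set0, Y != set0, [disjoint X & Y] & S = X :|: Y] /\
    [/\ independent e X, independent e Y &
        forall x y, x \in X -> y \in Y -> e x y].

Definition biclique (T : finType) (e : rel T) (B : {set T}) : Prop :=
  induces_complete_bipartite e B /\
  forall B' : {set T}, B \subset B' -> induces_complete_bipartite e B' -> B' = B.

Definition kb_degree (T : finType) (e : rel T) (B : {set T}) (d : nat) : Prop :=
  exists S : {set {set T}},
    (forall B', B' \in S <-> [/\ biclique e B', B' != B & B :&: B' != set0])
    /\ #|S| = d.

(* Main.v *)
Require Import Defs.
From mathcomp Require Import all_boot.
From mathcomp Require Import zify.
From Stdlib Require Import Classical.
Set Implicit Arguments. Unset Strict Implicit. Unset Printing Implicit Defensive.

Section Main.
Variable T : finType.
Variable e : rel T.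
Hypothesis esym : symmetric e.
Hypothesis eirr : irreflexive e.
Hypothesis econn : graph_connected e.
Hypothesis etw : false_twin_free e.

Local Notation cb := (induces_complete_bipartite e).

Lemma eqsym_b (a b : bool) : a = b -> b = a.
Proof. by move=> ->. Qed.

Lemma tri C a b c : cb C -> a \in C -> b \in C -> c \in C -> e a b -> e a c = ~~ e b c.
Proof.
case=> X [Y [[_ _ _ ->] [iX iY cXY]]] aC bC cC eab.
move: aC bC cC; rewrite !inE.
have iXf := iX; have iYf := iY.
case/orP=> ha; case/orP=> hb; case/orP=> hc.
- by move: (iX _ _ ha hb); rewrite eab.
- by move: (iX _ _ ha hb); rewrite eab.
- by rewrite (negbTE (iX _ _ ha hc)) (esym b c) (cXY _ _ hc hb).
- by rewrite (negbTE (iY _ _ hb hc)) (cXY _ _ ha hc).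
- by rewrite (negbTE (iX _ _ hb hc)) (esym a c) (cXY _ _ hc ha).
- by rewrite (negbTE (iY _ _ ha hc)) (cXY _ _ hb hc).
- by move: (iY _ _ ha hb); rewrite eab.
- by move: (iY _ _ ha hb); rewrite eab.
Qed.

Lemma triF C a b c : cb C -> a \in C -> b \in C -> c \in C -> e a b ->
  ~~ e a c -> ~~ e b c -> False.
Proof. move=> h aC bC cC eab nac nbc; move: (tri h aC bC cC eab); rewrite (negbTE nac) nbc //. Qed.

Lemma triT C a b c : cb C -> a \in C -> b \in C -> c \in C -> e a b ->
  e a c -> e b c -> False.
Proof. move=> h aC bC cC eab nac nbc; move: (tri h aC bC cC eab); rewrite nac nbc //. Qed.

Lemma cb_parts (P Q : {set T}) : (exists p, p \in P) -> (exists q, q \in Q) ->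
  independent e P -> independent e Q -> (forall p q, p \in P -> q \in Q -> e p q) ->
  cb (P :|: Q).
Proof.
move=> [p pP] [q qQ] iP iQ cPQ; exists P, Q; split; split => //.
- by apply/set0Pn; exists p.
- by apply/set0Pn; exists q.
- rewrite -setI_eq0; apply/eqP/setP => v; rewrite !inE; apply/negbTE/negP => /andP[vP vQ].
  by move: (cPQ _ _ vP vQ); rewrite eirr.
Qed.

Lemma ind1 c : independent e [set c].
Proof. by move=> x y; rewrite !inE => /eqP-> /eqP->; rewrite eirr. Qed.

Lemma ind2 a b : ~~ e a b -> independent e [set a; b].
Proof.
move=> nab x y; rewrite !inE => /orP[]/eqP-> /orP[]/eqP->; rewrite ?eirr //.
by rewrite esym.
Qed.

Lemma ind3 a b c : ~~ e a b -> ~~ e a c -> ~~ e b c -> independent e [set a; b; c].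
Proof.
move=> nab nac nbc x y; rewrite !inE => /orP[/orP[]|]/eqP-> /orP[/orP[]|]/eqP->;
  rewrite ?eirr // esym //.
Qed.

Lemma cb_edge a b : e a b -> cb [set a; b].
Proof.
move=> eab; apply: cb_parts; [by exists a; rewrite inE|by exists b; rewrite inE|
  exact: ind1|exact: ind1|].
by move=> p q; rewrite !inE => /eqP-> /eqP->.
Qed.

Lemma cb_P3 c a b : e c a -> e c b -> ~~ e a b -> cb [set c; a; b].
Proof.
move=> eca ecb nab.
have -> : [set c; a; b] = [set c] :|: [set a; b] by apply/setP=> v; rewrite !inE orbA.
apply: cb_parts; [by exists c; rewrite inE|by exists a; rewrite !inE eqxx|
  exact: ind1|exact: ind2|].
by move=> p q; rewrite !inE => /eqP-> /orP[]/eqP->.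
Qed.

Lemma cb_nbr C v : cb C -> v \in C -> exists2 w, w \in C & e v w.
Proof.
case=> X [Y [[/set0Pn[x xX] /set0Pn[y yY] _ ->] [_ _ cXY]]]; rewrite inE => /orP[] vh.
- by exists y; rewrite ?inE ?yY ?orbT // cXY.
- by exists x; rewrite ?inE ?xX // esym cXY.
Qed.

Lemma ext_step (S : {set T}) : cb S ->
  (exists2 C, biclique e C & S \subset C) \/ exists2 B' : {set T}, S \proper B' & cb B'.
Proof.
move=> cbS.
case: (classic (forall B' : {set T}, S \subset B' -> cb B' -> B' = S)) => hmax.
  by left; exists S => //; split.
case: (not_all_ex_not _ _ hmax) => B' h1.
have [sB' h2] := imply_to_and _ _ h1.
have [cB' nB'] := imply_to_and _ _ h2.
right; exists B' => //.
by rewrite properEneq sB' andbT; apply/eqP => h; apply: nB'; rewrite h.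
Qed.

Lemma ext n : forall S : {set T}, #|~: S| <= n -> cb S -> exists2 C, biclique e C & S \subset C.
Proof.
elim: n => [|n IH] S hS cbS; case: (ext_step cbS) => // [[B' pB' cB']];
have lt : #|~: B'| < #|~: S| by apply: proper_card; rewrite properC.
- lia.
- have [C bC sC] := IH B' ltac:(lia) cB'. exists C => //.
  exact: subset_trans (proper_sub pB') sC.
Qed.

Lemma extend (S : {set T}) : cb S -> exists2 C, biclique e C & S \subset C.
Proof. exact: ext (leqnn _). Qed.

Lemma twinE u v : (forall t, e u t = e v t) -> u = v.
Proof.
move=> h; apply: NNPP => nuv.
have : nbhd e u != nbhd e v by apply: etw; apply/eqP.
by rewrite (_ : nbhd e u = nbhd e v) ?eqxx //; apply/setP => t; rewrite !inE h.
Qed.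

Lemma twin_dist u v : u != v -> exists t, (e u t && ~~ e v t) \/ (e v t && ~~ e u t).
Proof.
move=> /eqP nuv; apply: NNPP => hn; apply: nuv; apply: twinE => t.
apply/idP/idP => h; apply: NNPP => h'; apply: hn; exists t.
- by left; rewrite h; apply/negP.
- by right; rewrite h; apply/negP.
Qed.

Lemma closure_all (A : {set T}) a : a \in A ->
  (forall u t, u \in A -> e u t -> t \in A) -> forall t, t \in A.
Proof.
move=> aA hA t.
have cl : closed e A.
  move=> x y exy; apply/idP/idP => h; first exact: hA h exy.
  by apply: hA h _; rewrite esym.
by rewrite -(closed_connect cl (econn a t)).
Qed.

Lemma closure_card (A : {set T}) a : a \in A ->
  (forall u t, u \in A -> e u t -> t \in A) -> #|T| <= #|A|.
Proof.
move=> aA hA.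
have cl : closed e A.
  move=> x y exy; apply/idP/idP => h; first exact: hA h exy.
  by apply: hA h _; rewrite esym.
rewrite -cardsT; apply: subset_leq_card; apply/subsetP => t _.
by rewrite -(closed_connect cl (econn a t)).
Qed.



Variable B : {set T}.
Hypothesis Bbic : biclique e B.
Variable Sb : {set {set T}}.
Hypothesis hSb : forall B', B' \in Sb <-> [/\ biclique e B', B' != B & B :&: B' != set0].
Hypothesis hSb2 : #|Sb| = 2.
Hypothesis e7 : 7 <= #|T|.

Definition other (C : {set T}) := [/\ biclique e C, C != B & B :&: C != set0].

Lemma other_cb C : other C -> cb C.
Proof. by case=> [[]]. Qed.

Lemma get_other (S : {set T}) v w : cb S -> v \in S -> v \in B -> w \in S -> w \notin B ->
  exists2 C, other C & S \subset C.
Proof.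
move=> cS vS vB wS wB; have [C bC sC] := extend cS; exists C => //; split => //.
- by apply/eqP => h; move: wB; rewrite -h (subsetP sC).
- by apply/set0Pn; exists v; rewrite inE vB (subsetP sC).
Qed.

Lemma three_others C1 C2 C3 : other C1 -> other C2 -> other C3 ->
  C1 != C2 -> C1 != C3 -> C2 != C3 -> False.
Proof.
move=> o1 o2 o3 n12 n13 n23.
have sub : C1 |: (C2 |: [set C3]) \subset Sb.
  by apply/subsetP => C; rewrite !inE => /orP[/eqP->|/orP[]/eqP->]; apply/hSb.
have := subset_leq_card sub; rewrite hSb2 cardsU1 cardsU1 cards1 !inE.
by rewrite (negbTE n12) (negbTE n13) (negbTE n23).
Qed.

Lemma pick2 D1 D2 C : other D1 -> other D2 -> D1 != D2 -> other C -> C = D1 \/ C = D2.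
Proof.
move=> o1 o2 n12 oC; apply: NNPP => h; apply: (three_others o1 o2 oC n12).
- by apply/eqP => h'; apply: h; left.
- by apply/eqP => h'; apply: h; right.
Qed.

Record parts (X Y : {set T}) : Prop := Parts {
  pB : B = X :|: Y;
  pX : exists x, x \in X;
  pY : exists y, y \in Y;
  pXi : independent e X;
  pYi : independent e Y;
  pXY : forall x y, x \in X -> y \in Y -> e x y }.

Lemma parts_sym X Y : parts X Y -> parts Y X.
Proof.
case=> hB hX hY iX iY cXY; split => //; first by rewrite setUC.
by move=> y x yY xX; rewrite esym cXY.
Qed.

Lemma inB X Y t : parts X Y -> (t \in B) = (t \in X) || (t \in Y).
Proof. by case=> -> *; rewrite inE. Qed.

Lemma maxB X Y t : parts X Y -> t \notin B -> (forall x, x \in X -> e t x) ->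
  (forall y, y \in Y -> ~~ e t y) -> False.
Proof.
move=> hP tB htX htY; case: (Bbic) => _ hmax.
have cbt : cb (X :|: (t |: Y)).
  apply: cb_parts; first exact: pX hP.
  - by exists t; rewrite !inE eqxx.
  - exact: pXi hP.
  - move=> a b; rewrite !inE => /orP[/eqP->|aY] /orP[/eqP->|bY].
    + by rewrite eirr.
    + exact: htY.
    + by rewrite esym htY.
    + exact: (pYi hP aY bY).
  - move=> a b aX; rewrite !inE => /orP[/eqP->|bY]; first by rewrite esym htX.
    exact: (pXY hP aX bY).
have sub : B \subset X :|: (t |: Y).
  by apply/subsetP => v; rewrite (inB _ hP) !inE => /orP[]->; rewrite ?orbT.
move: (hmax _ sub cbt) => h; move: tB; rewrite -h !inE eqxx orbT //.
Qed.


Lemma card_le1 (A : {set T}) : (forall a b, a \in A -> b \in A -> a = b) -> #|A| <= 1.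
Proof. by move=> h; apply/card_le1_eqP => a b aA bA; apply: h. Qed.

Lemma card_le2 (A : {set T}) x : (forall a b, a \in A -> b \in A -> a != x -> b != x -> a = b) ->
  #|A| <= 2.
Proof.
move=> h; rewrite (cardsD1 x); have : #|A :\ x| <= 1.
  by apply: card_le1 => a b; rewrite !inE => /andP[ax aA] /andP[bx bA]; apply: h.
by case: (x \in A) => /=; lia.
Qed.

Record triS (X Y : {set T}) x y z (Dx Dy : {set T}) : Prop := TriS {
  tP : parts X Y; tx : x \in X; ty : y \in Y; tzB : z \notin B; tzx : e z x; tzy : e z y;
  tDx : other Dx; tDy : other Dy; tDxy : Dx != Dy; txDx : x \in Dx; tzDx : z \in Dx;
  tyDy : y \in Dy; tzDy : z \in Dy }.

Lemma triS_sym X Y x y z Dx Dy : triS X Y x y z Dx Dy -> triS Y X y x z Dy Dx.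
Proof. by case=> *; split => //; [exact: parts_sym|rewrite eq_sym]. Qed.

Ltac untri H := case: (H) => hP xX yY zB ezx ezy oDx oDy nD xDx zDx yDy zDy.

Lemma T_xnDy X Y x y z Dx Dy : triS X Y x y z Dx Dy -> x \notin Dy.
Proof.
move=> H; untri H; apply/negP => xDy.
apply: (triT (other_cb oDy) xDy yDy zDy); rewrite ?(pXY hP xX yY) // esym //.
Qed.

Lemma T_capX X Y x y z Dx Dy C : triS X Y x y z Dx Dy -> other C -> x \in C -> C = Dx.
Proof.
move=> H oC xC; untri H; case: (pick2 oDx oDy nD oC) => // eC.
by move: (T_xnDy H); rewrite -eC xC.
Qed.

Lemma T_trivert X Y x y z Dx Dy w : triS X Y x y z Dx Dy -> w \notin B -> e w x -> e w y ->
  w \in Dx.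
Proof.
move=> H wB ewx ewy; untri H.
have exw : e x w by rewrite esym.
have [C oC sC] := get_other (cb_edge exw) (v := x) (w := w) ltac:(by rewrite !inE eqxx)
   ltac:(by rewrite (inB _ hP) xX) ltac:(by rewrite !inE eqxx orbT) wB.
by rewrite -(T_capX H oC (subsetP sC _ _)) ?(subsetP sC) // !inE eqxx ?orbT.
Qed.

Lemma T_TbX X Y x y z Dx Dy w x' : triS X Y x y z Dx Dy -> w \notin B -> e w x -> e w y ->
  x' \in X -> e w x' -> x' = x.
Proof.
move=> H wB ewx ewy x'X ewx'; untri H.
have wDx := T_trivert H wB ewx ewy.
have wDy := T_trivert (triS_sym H) wB ewy ewx.
have x'Dx : x' \in Dx.
  have ex'w : e x' w by rewrite esym.
  have [C oC sC] := get_other (cb_edge ex'w) (v := x') (w := w) ltac:(by rewrite !inE eqxx)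
     ltac:(by rewrite (inB _ hP) x'X) ltac:(by rewrite !inE eqxx orbT) wB.
  have x'C : x' \in C by rewrite (subsetP sC) // !inE eqxx.
  have wC : w \in C by rewrite (subsetP sC) // !inE eqxx orbT.
  case: (pick2 oDx oDy nD oC) => eC; first by rewrite -eC.
  rewrite eC in x'C wC; exfalso.
  by apply: (triT (other_cb oDy) x'C yDy wDy); rewrite ?(pXY hP x'X yY) // esym.
have gen : forall a a' t, a \in X -> a' \in X -> a \in Dx -> a' \in Dx -> e w a ->
    e a t -> ~~ e a' t -> False.
  move=> a a' t aX a'X aDx a'Dx ewa eat na't.
  have tB : t \notin B.
    rewrite (inB _ hP); apply/negP => /orP[] ht.
    - by move: (pXi hP aX ht); rewrite eat.
    - by move: na't; rewrite (pXY hP a'X ht).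
  have [C oC sC] := get_other (cb_edge eat) (v := a) (w := t) ltac:(by rewrite !inE eqxx)
     ltac:(by rewrite (inB _ hP) aX) ltac:(by rewrite !inE eqxx orbT) tB.
  have aC : a \in C by rewrite (subsetP sC) // !inE eqxx.
  have tC : t \in C by rewrite (subsetP sC) // !inE eqxx orbT.
  case: (pick2 oDx oDy nD oC) => eC; rewrite eC in aC tC.
  - by apply: (triF (other_cb oDx) aC tC a'Dx eat); rewrite ?(pXi hP aX a'X) // esym.
  - by apply: (triT (other_cb oDy) aC yDy wDy); rewrite ?(pXY hP aX yY) // esym.
apply: NNPP => nx; have [t [/andP[h1 h2]|/andP[h1 h2]]] := twin_dist (introN eqP nx).
- exact: (gen x' x t x'X xX x'Dx xDx ewx' h1 h2).
- exact: (gen x x' t xX x'X xDx x'Dx ewx h1 h2).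
Qed.

Lemma T_TcX X Y x y z Dx Dy x'' : triS X Y x y z Dx Dy -> x'' \in X -> x'' != x -> x'' \in Dy.
Proof.
move=> H x''X nx; untri H.
have nzx : ~~ e x'' z.
  by apply/negP => h; move: nx; rewrite (T_TbX H zB ezx ezy x''X (etrans (esym _ _) h)) eqxx.
have eyx : e y x'' by rewrite esym (pXY hP x''X yY).
have eyz : e y z by rewrite esym.
have [C oC sC] := get_other (cb_P3 eyx eyz nzx) (v := y) (w := z) ltac:(by rewrite !inE eqxx)
   ltac:(by rewrite (inB _ hP) yY orbT) ltac:(by rewrite !inE eqxx !orbT) zB.
have yC : y \in C by rewrite (subsetP sC) // !inE eqxx.
by rewrite -(T_capX (triS_sym H) oC yC) (subsetP sC) // !inE eqxx ?orbT.
Qed.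

Lemma T_TeX X Y x y z Dx Dy t : triS X Y x y z Dx Dy -> t \notin B -> e x t -> e y t.
Proof.
move=> H tB ext; untri H; apply: NNPP => /negP nyt.
have [C oC sC] := get_other (cb_P3 (pXY hP xX yY) ext nyt) (v := x) (w := t)
   ltac:(by rewrite !inE eqxx) ltac:(by rewrite (inB _ hP) xX)
   ltac:(by rewrite !inE eqxx !orbT) tB.
have xC : x \in C by rewrite (subsetP sC) // !inE eqxx.
have yC : y \in C by rewrite (subsetP sC) // !inE eqxx ?orbT.
by move: (T_xnDy (triS_sym H)); rewrite -(T_capX H oC xC) yC.
Qed.

Lemma T_uniq X Y x y z Dx Dy w1 w2 : triS X Y x y z Dx Dy ->
  w1 \notin B -> e w1 x -> e w1 y -> w2 \notin B -> e w2 x -> e w2 y -> w1 = w2.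
Proof.
move=> H.
have out : forall a b s, a \notin B -> e a x -> e a y -> b \notin B -> e b x -> e b y ->
    s \notin B -> e a s -> e b s.
  move=> a b s aB eax eay bB ebx eby sB eas; untri H.
  have aDx := T_trivert H aB eax eay; have bDx := T_trivert H bB ebx eby.
  have nxs : ~~ e x s.
    apply/negP => exs; have eys := T_TeX H sB exs.
    have sDx := T_trivert H sB ltac:(by rewrite esym) ltac:(by rewrite esym).
    by apply: (triT (other_cb oDx) xDx aDx sDx); rewrite // esym.
  have eax' : e a x := eax.
  have [C oC sC] := get_other (cb_P3 eax eas nxs) (v := x) (w := a)
     ltac:(by rewrite !inE eqxx ?orbT) ltac:(by rewrite (inB _ hP) xX)
     ltac:(by rewrite !inE eqxx) aB.
  have xC : x \in C by rewrite (subsetP sC) // !inE eqxx ?orbT.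
  have sDx : s \in Dx by rewrite -(T_capX H oC xC) (subsetP sC) // !inE eqxx ?orbT.
  have nab : e a b = false.
    by move: (tri (other_cb oDx) xDx aDx bDx ltac:(by rewrite esym)); rewrite esym ebx => /eqsym_b/negbTE.
  move: (tri (other_cb oDx) aDx sDx bDx eas); rewrite nab => /eqsym_b/negbFE.
  by rewrite esym.
move=> w1B e1x e1y w2B e2x e2y; untri H; apply: twinE => s.
case sB : (s \in B); last first.
  by apply/idP/idP; [apply: out w1B _ _ w2B _ _ _|apply: out w2B _ _ w1B _ _ _]; rewrite ?sB.
move: sB; rewrite (inB _ hP) => /orP[] hs.
- apply/idP/idP => h.
  + by rewrite (T_TbX H w1B e1x e1y hs h).
  + by rewrite (T_TbX H w2B e2x e2y hs h).
- apply/idP/idP => h.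
  + by rewrite (T_TbX (triS_sym H) w1B e1y e1x hs h).
  + by rewrite (T_TbX (triS_sym H) w2B e2y e2x hs h).
Qed.

Lemma T_nbrX X Y x y z Dx Dy t : triS X Y x y z Dx Dy -> t \notin B -> e x t -> t = z.
Proof.
move=> H tB ext; untri H.
apply: (T_uniq H tB _ _ zB ezx ezy); rewrite esym //; exact: T_TeX H tB ext.
Qed.

Lemma T_notDx X Y x y z Dx Dy x' : triS X Y x y z Dx Dy -> x' \in X -> x' != x -> x' \notin Dx.
Proof.
move=> H x'X nx; untri H; apply/negP => h.
have n1 : ~~ e x x' := pXi hP xX x'X.
have n2 : ~~ e z x'.
  by apply/negP => ezx'; move: nx; rewrite (T_TbX H zB ezx ezy x'X ezx') eqxx.
by apply: (triF (other_cb oDx) xDx zDx h _ n1 n2); rewrite esym.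
Qed.

Lemma T_TfX X Y x y z Dx Dy x' t : triS X Y x y z Dx Dy -> x' \in X -> x' != x ->
  t \notin B -> e x' t ->
  [/\ e t z, ~~ e t x, ~~ e t y & forall x'', x'' \in X -> x'' != x -> e t x''].
Proof.
move=> H x'X nx tB ex't; untri H.
have x'Dy := T_TcX H x'X nx.
have [C oC sC] := get_other (cb_edge ex't) (v := x') (w := t) ltac:(by rewrite !inE eqxx)
   ltac:(by rewrite (inB _ hP) x'X) ltac:(by rewrite !inE eqxx orbT) tB.
have x'C : x' \in C by rewrite (subsetP sC) // !inE eqxx.
have tC : t \in C by rewrite (subsetP sC) // !inE eqxx orbT.
have tDy : t \in Dy.
  case: (pick2 oDx oDy nD oC) => eC; rewrite eC in x'C tC => //.
  by move: (T_notDx H x'X nx); rewrite x'C.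
have nyt : e y t = false.
  by move: (tri (other_cb oDy) x'Dy yDy tDy (pXY hP x'X yY)); rewrite ex't => /eqsym_b/negbTE.
have nxt : e x t = false.
  by apply/negP => h; move: nyt; rewrite (T_TeX H tB h).
split.
- move: (tri (other_cb oDy) yDy zDy tDy ltac:(by rewrite esym)); rewrite nyt.
  by move=> /eqsym_b/negbFE; rewrite esym.
- by rewrite esym nxt.
- by rewrite esym nyt.
- move=> x'' x''X nx''; have x''Dy := T_TcX H x''X nx''.
  move: (tri (other_cb oDy) x'Dy tDy x''Dy ex't); rewrite (negbTE (pXi hP x'X x''X)).
  by move=> /eqsym_b/negbFE.
Qed.

Lemma T_rle2X X Y x y z Dx Dy x1 x2 : triS X Y x y z Dx Dy -> x1 \in X -> x2 \in X ->
  x1 != x -> x2 != x -> x1 = x2.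
Proof.
move=> H x1X x2X n1 n2; untri H; apply: twinE => s.
case sB : (s \in B); last first.
  apply/idP/idP => h.
  - by case: (T_TfX H x1X n1 (negbT sB) h) => _ _ _ /(_ _ x2X n2); rewrite esym.
  - by case: (T_TfX H x2X n2 (negbT sB) h) => _ _ _ /(_ _ x1X n1); rewrite esym.
move: sB; rewrite (inB _ hP) => /orP[] hs.
- by rewrite (negbTE (pXi hP x1X hs)) (negbTE (pXi hP x2X hs)).
- by rewrite (pXY hP x1X hs) (pXY hP x2X hs).
Qed.

Lemma T_TgY X Y x y z Dx Dy s y' : triS X Y x y z Dx Dy -> s \notin B -> e z s ->
  y' \in Y -> y' != y -> e s y'.
Proof.
move=> H sB ezs y'Y ny; untri H.
have nxs : ~~ e x s.
  by apply/negP => h; move: ezs; rewrite -(T_nbrX H sB h) eirr.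
have [C oC sC] := get_other (cb_P3 ezx ezs nxs) (v := x) (w := z)
   ltac:(by rewrite !inE eqxx ?orbT) ltac:(by rewrite (inB _ hP) xX)
   ltac:(by rewrite !inE eqxx) zB.
have xC : x \in C by rewrite (subsetP sC) // !inE eqxx ?orbT.
have sDx : s \in Dx by rewrite -(T_capX H oC xC) (subsetP sC) // !inE eqxx ?orbT.
have y'Dx := T_TcX (triS_sym H) y'Y ny.
have nzy' : e z y' = false.
  by apply/negP => h; move: ny; rewrite (T_TbX (triS_sym H) zB ezy ezx y'Y h) eqxx.
by move: (tri (other_cb oDx) zDx sDx y'Dx ezs); rewrite nzy' => /eqsym_b/negbFE.
Qed.

Lemma cardU_le (A1 A2 : {set T}) : #|A1 :|: A2| <= #|A1| + #|A2|.
Proof. by rewrite -cardsUI; apply: leq_addr. Qed.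

Lemma cardU1_le a (A1 : {set T}) : #|a |: A1| <= #|A1|.+1.
Proof. by rewrite cardsU1; case: (a \notin A1). Qed.

Lemma T_contra X Y x y z Dx Dy y' : triS X Y x y z Dx Dy -> y' \in Y -> y' != y -> False.
Proof.
move=> H y'Y ny; untri H.
pose S := [set s | (s \notin B) && e z s].
have charS : forall s q, s \in S ->
    e s q = [|| q == z, (q \in X) && (q != x) | (q \in Y) && (q != y)].
  move=> s q; rewrite inE => /andP[sB ezs].
  have nxs : ~~ e x s.
    by apply/negP => h; move: ezs; rewrite -(T_nbrX H sB h) eirr.
  have nys : ~~ e y s.
    by apply/negP => h; move: ezs; rewrite -(T_nbrX (triS_sym H) sB h) eirr.
  have [C oC sC] := get_other (cb_P3 ezx ezs nxs) (v := x) (w := z)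
     ltac:(by rewrite !inE eqxx ?orbT) ltac:(by rewrite (inB _ hP) xX)
     ltac:(by rewrite !inE eqxx) zB.
  have xC : x \in C by rewrite (subsetP sC) // !inE eqxx ?orbT.
  have sDx : s \in Dx by rewrite -(T_capX H oC xC) (subsetP sC) // !inE eqxx ?orbT.
  apply/idP/idP.
  - move=> esq; case qB: (q \in B).
    + move: qB; rewrite (inB _ hP) => /orP[] hq; apply/or3P.
      * apply: Or32; rewrite hq /=; apply/eqP => qx; move: nxs; by rewrite -qx esym esq.
      * apply: Or33; rewrite hq /=; apply/eqP => qy; move: nys; by rewrite -qy esym esq.
    + apply/or3P; apply: Or31; apply/eqP; apply: NNPP => nqz.
      have nxq : ~~ e x q.
        by apply/negP => h; apply: nqz; exact: (T_nbrX H (negbT qB) h).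
      case ey'q : (e y' q).
      * have [ezq _ _ _] := T_TfX (triS_sym H) y'Y ny (negbT qB) ey'q.
        have ezq' : e z q by rewrite esym.
        have [C' oC' sC'] := get_other (cb_P3 ezx ezq' nxq) (v := x) (w := z)
           ltac:(by rewrite !inE eqxx ?orbT) ltac:(by rewrite (inB _ hP) xX)
           ltac:(by rewrite !inE eqxx) zB.
        have xC' : x \in C' by rewrite (subsetP sC') // !inE eqxx ?orbT.
        have qDx : q \in Dx by rewrite -(T_capX H oC' xC') (subsetP sC') // !inE eqxx ?orbT.
        exact: (triT (other_cb oDx) zDx sDx qDx ezs ezq' esq).
      * have esy' : e s y' := T_TgY H sB ezs y'Y ny.
        have [C' oC' sC'] := get_other (cb_P3 esy' esq (negbT ey'q)) (v := y') (w := s)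
           ltac:(by rewrite !inE eqxx ?orbT) ltac:(by rewrite (inB _ hP) y'Y orbT)
           ltac:(by rewrite !inE eqxx) sB.
        have y'C' : y' \in C' by rewrite (subsetP sC') // !inE eqxx ?orbT.
        have qC' : q \in C' by rewrite (subsetP sC') // !inE eqxx ?orbT.
        case: (pick2 oDx oDy nD oC') => eC; rewrite eC in y'C' qC'.
        -- apply: (triF (other_cb oDx) sDx qC' xDx esq); first by rewrite esym.
           by rewrite esym.
        -- by move: (T_notDx (triS_sym H) y'Y ny); rewrite y'C'.
  - case/or3P => [/eqP->|/andP[qX nqx]|/andP[qY nqy]].
    + by rewrite esym.
    + exact: T_TgY (triS_sym H) sB ezs qX nqx.
    + exact: T_TgY H sB ezs qY nqy.
have S1 : #|S| <= 1.
  by apply: card_le1 => s1 s2 h1 h2; apply: twinE => q; rewrite (charS _ _ h1) (charS _ _ h2).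
pose A := B :|: (z |: S).
have clA : forall u t, u \in A -> e u t -> t \in A.
  move=> u t; rewrite /A !inE => /orP[uB|/orP[/eqP->|/andP[uB ezu]]] eut.
  - case tB : (t \in B) => //=; move: uB; rewrite (inB _ hP) => /orP[] hu.
    + case: (eqVneq u x) => ux.
      * by rewrite ux in eut; rewrite (T_nbrX H (negbT tB) eut) eqxx.
      * have [etz _ _ _] := T_TfX H hu ux (negbT tB) eut.
        by rewrite esym etz orbT.
    + case: (eqVneq u y) => uy.
      * by rewrite uy in eut; rewrite (T_nbrX (triS_sym H) (negbT tB) eut) eqxx.
      * have [etz _ _ _] := T_TfX (triS_sym H) hu uy (negbT tB) eut.
        by rewrite esym etz orbT.
  - by case: (t \in B) => //=; rewrite eut orbT.
  - have uS : u \in S by rewrite inE uB ezu.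
    move: eut; rewrite (charS _ _ uS) => /or3P[/eqP->|/andP[tX _]|/andP[tY _]].
    + by rewrite eqxx orbT.
    + by rewrite (inB _ hP) tX.
    + by rewrite (inB _ hP) tY orbT.
have := closure_card (a := z) (A := A) ltac:(by rewrite !inE eqxx orbT) clA.
have cX : #|X| <= 2 by apply: (card_le2 (x := x)) => a b aX bX; exact: T_rle2X H aX bX.
have cY : #|Y| <= 2 by apply: (card_le2 (x := y)) => a b aY bY; exact: T_rle2X (triS_sym H) aY bY.
have cB : #|B| <= #|X| + #|Y| by rewrite (pB hP); apply: cardU_le.
have := cardU_le B (z |: S); have := cardU1_le z S.
move=> h1 h2 h3; rewrite /A in h3; lia.
Qed.

Lemma T_sDx X Y x y z Dx Dy s : triS X Y x y z Dx Dy -> s \notin B -> e z s -> s \in Dx.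
Proof.
move=> H sB ezs; untri H.
have nxs : ~~ e x s.
  by apply/negP => h; move: ezs; rewrite -(T_nbrX H sB h) eirr.
have [C oC sC] := get_other (cb_P3 ezx ezs nxs) (v := x) (w := z)
   ltac:(by rewrite !inE eqxx ?orbT) ltac:(by rewrite (inB _ hP) xX)
   ltac:(by rewrite !inE eqxx) zB.
have xC : x \in C by rewrite (subsetP sC) // !inE eqxx ?orbT.
by rewrite -(T_capX H oC xC) (subsetP sC) // !inE eqxx ?orbT.
Qed.

Lemma T_cnbX X Y x y z Dx Dy : triS X Y x y z Dx Dy ->
  (forall a, a \in X -> a = x) -> (forall b, b \in Y -> b = y) ->
  cnbhd e x = [set x; y; z].
Proof.
move=> H hX hY; untri H; apply/setP => t; rewrite /cnbhd /nbhd !inE.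
apply/idP/idP.
- case/orP => [->//|ext].
  case tB : (t \in B).
  + move: tB; rewrite (inB _ hP) => /orP[] ht.
    * by move: ext; rewrite (hX _ ht) eirr.
    * by rewrite (hY _ ht) eqxx orbT.
  + by rewrite (T_nbrX H (negbT tB) ext) eqxx !orbT.
- case/orP => [/orP[]|] /eqP->; rewrite ?eqxx //.
  + by rewrite (pXY hP xX yY) orbT.
  + by rewrite esym ezx orbT.
Qed.

Lemma T_K11 X Y x y z Dx Dy : triS X Y x y z Dx Dy ->
  (forall a, a \in X -> a = x) -> (forall b, b \in Y -> b = y) ->
  [/\ B = [set x; y], e x y, z != x & z != y] /\
  [/\ cnbhd e x = [set x; y; z], cnbhd e y = [set x; y; z] &
      independent e (nbhd e z :\: [set x; y])].
Proof.
move=> H hX hY; have H' := H; untri H'.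
have eB : B = [set x; y].
  apply/setP => v; rewrite (inB _ hP) !inE; apply/idP/idP.
  - by case/orP => [/hX->|/hY->]; rewrite eqxx ?orbT.
  - by case/orP => /eqP->; rewrite ?xX ?yY ?orbT.
split; split.
- exact: eB.
- by rewrite (pXY hP xX yY).
- by apply/eqP => h; move: zB; rewrite h (inB _ hP) xX.
- by apply/eqP => h; move: zB; rewrite h (inB _ hP) yY orbT.
- exact: T_cnbX H hX hY.
- rewrite (T_cnbX (triS_sym H) hY hX); apply/setP => v; rewrite !inE.
  by case: (v == x); case: (v == y).
- move=> s s'; rewrite !inE => /andP[/norP[sx sy] ezs] /andP[/norP[s'x s'y] ezs'].
  have sB : s \notin B by rewrite eB !inE negb_or sx sy.
  have s'B : s' \notin B by rewrite eB !inE negb_or s'x s'y.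
  have sDx := T_sDx H sB ezs; have s'Dx := T_sDx H s'B ezs'.
  by move: (tri (other_cb oDx) zDx sDx s'Dx ezs); rewrite ezs' => /eqsym_b.
Qed.

Definition NT (X Y : {set T}) := forall t a b, t \notin B -> a \in X -> b \in Y ->
  e t a -> e t b -> False.

Lemma NT_sym X Y : NT X Y -> NT Y X.
Proof. by move=> h t a b tB aY bX eta etb; exact: h tB bX aY etb eta. Qed.

Lemma NT_nbB X Y b t : parts X Y -> NT X Y -> b \in X -> (forall a, a \in X -> a = b) ->
  e b t = (t \in Y).
Proof.
move=> hP hNT bX hX; apply/idP/idP => [ebt|tY]; last by rewrite (pXY hP bX tY).
case tB : (t \in B).
- move: tB; rewrite (inB _ hP) => /orP[] // /hX tb.
  by move: ebt; rewrite tb eirr.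
- exfalso; apply: (maxB hP (negbT tB)).
  + by move=> a /hX ->; rewrite esym.
  + by move=> y yY; apply/negP => ety; apply: (hNT t b y (negbT tB) bX yY _ ety); rewrite esym.
Qed.

Record ntS X Y b D1 D2 y2 : Prop := NtS {
  nP : parts X Y; nNT : NT X Y; nbX : b \in X; nhX : forall a, a \in X -> a = b;
  nD1 : other D1; nD2 : other D2; nD : D1 != D2; nbD1 : b \in D1; nbD2 : b \in D2;
  ny2Y : y2 \in Y; ny2D2 : y2 \in D2; ny2D1 : y2 \notin D1 }.

Ltac unnt H := case: (H) => hP hNT bX hX oD1 oD2 nD bD1 bD2 y2Y y2D2 y2D1.

Lemma N_nbw X Y b D1 D2 y2 w : ntS X Y b D1 D2 y2 -> w \notin B -> e b w = false.
Proof.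
move=> H wB; unnt H; rewrite (NT_nbB _ hP hNT bX hX).
by apply/negP => wY; move: wB; rewrite (inB _ hP) wY orbT.
Qed.

Lemma N_allb X Y b D1 D2 y2 C : ntS X Y b D1 D2 y2 -> other C -> b \in C.
Proof. by move=> H oC; unnt H; case: (pick2 oD1 oD2 nD oC) => ->. Qed.

Lemma N_Wy' X Y b D1 D2 y2 C y t : ntS X Y b D1 D2 y2 -> other C -> y \in Y -> t \notin B ->
  y \in C -> t \in C -> e y t.
Proof.
move=> H oC yY tB yC tC; have H' := H; unnt H'.
move: (tri (other_cb oC) (N_allb H oC) yC tC (pXY hP bX yY)).
by rewrite (N_nbw H tB) => /eqsym_b/negbFE.
Qed.

Lemma N_Wy X Y b D1 D2 y2 y t : ntS X Y b D1 D2 y2 -> y \in Y -> t \notin B -> e y t ->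
  (y \in D1) && (t \in D1) || (y \in D2) && (t \in D2).
Proof.
move=> H yY tB eyt; have H' := H; unnt H'.
have eyb : e y b by rewrite esym (pXY hP bX yY).
have nbt : ~~ e b t by rewrite (N_nbw H tB).
have [C oC sC] := get_other (cb_P3 eyb eyt nbt) (v := y) (w := t)
   ltac:(by rewrite !inE eqxx) ltac:(by rewrite (inB _ hP) yY orbT)
   ltac:(by rewrite !inE eqxx !orbT) tB.
have yC : y \in C by rewrite (subsetP sC) // !inE eqxx.
have tC : t \in C by rewrite (subsetP sC) // !inE eqxx !orbT.
by case: (pick2 oD1 oD2 nD oC) => eC; rewrite eC in yC tC; rewrite yC tC ?orbT.
Qed.

Lemma N_eYout X Y b D1 D2 y2 y t : ntS X Y b D1 D2 y2 -> y \in Y -> t \notin B ->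
  e y t = (y \in D1) && (t \in D1) || (y \in D2) && (t \in D2).
Proof.
move=> H yY tB; have H' := H; unnt H'; apply/idP/idP; first exact: (N_Wy H yY tB).
by case/orP => /andP[h1 h2]; [exact: N_Wy' H oD1 yY tB h1 h2|exact: N_Wy' H oD2 yY tB h1 h2].
Qed.

Lemma N_inD X Y b D1 D2 y2 u t : ntS X Y b D1 D2 y2 -> u \in B -> t \notin B -> e u t ->
  (t \in D1) || (t \in D2).
Proof.
move=> H uB tB eut; have H' := H; unnt H'.
have [C oC sC] := get_other (cb_edge eut) (v := u) (w := t) ltac:(by rewrite !inE eqxx)
   uB ltac:(by rewrite !inE eqxx orbT) tB.
have tC : t \in C by rewrite (subsetP sC) // !inE eqxx orbT.
by case: (pick2 oD1 oD2 nD oC) => eC; rewrite eC in tC; rewrite tC ?orbT.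
Qed.

Lemma N_qY X Y b D1 D2 y2 C : ntS X Y b D1 D2 y2 -> other C ->
  exists2 q, q \in Y & q \in C.
Proof.
move=> H oC; have H' := H; unnt H'.
have [q qC ebq] := cb_nbr (other_cb oC) (N_allb H oC).
by exists q => //; rewrite -(NT_nbB _ hP hNT bX hX).
Qed.

Lemma N_allin X Y b D1 D2 y2 t : ntS X Y b D1 D2 y2 -> t \notin B -> (t \in D1) || (t \in D2).
Proof.
move=> H tB; have H' := H; unnt H'.
pose A := B :|: (D1 :|: D2).
have clA : forall u t, u \in A -> e u t -> t \in A.
  move=> u s; rewrite /A !inE => hu eus.
  case sB : (s \in B) => //=.
  case uB : (u \in B).
    exact: N_inD H uB (negbT sB) eus.
  have hu' : (u \in D1) || (u \in D2) by move: hu; rewrite uB.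
  have gen : forall C, other C -> u \in C -> (s \in D1) || (s \in D2).
    move=> C oC uC; have [q qY qC] := N_qY H oC.
    have equ : e q u := N_Wy' H oC qY (negbT uB) qC uC.
    case eqs : (e q s).
      by apply: (N_inD H _ (negbT sB) eqs); rewrite (inB _ hP) qY orbT.
    have euq : e u q by rewrite esym.
    have [C' oC' sC'] := get_other (cb_P3 euq eus (negbT eqs)) (v := q) (w := u)
       ltac:(by rewrite !inE eqxx ?orbT) ltac:(by rewrite (inB _ hP) qY orbT)
       ltac:(by rewrite !inE eqxx) (negbT uB).
    have sC2 : s \in C' by rewrite (subsetP sC') // !inE eqxx !orbT.
    by case: (pick2 oD1 oD2 nD oC') => eC; rewrite eC in sC2; rewrite sC2 ?orbT.
  by case/orP: hu' => h; [exact: gen oD1 h|exact: gen oD2 h].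
have := closure_all (a := b) (A := A) ltac:(by rewrite !inE (inB _ hP) bX) clA t.
by rewrite !inE (negbTE tB).
Qed.

Lemma N_core X Y b D1 D2 y2 C u u' : ntS X Y b D1 D2 y2 -> other C -> u \notin B ->
  u' \notin B -> e u u' -> u \in C -> u' \notin C /\ (forall q, q \in Y -> q \in C -> e q u').
Proof.
move=> H oC uB u'B euu' uC; have H' := H; unnt H'.
have bC := N_allb H oC.
split.
  apply/negP => u'C; apply: (triF (other_cb oC) uC u'C bC euu').
  - by rewrite esym (N_nbw H uB).
  - by rewrite esym (N_nbw H u'B).
move=> q qY qC; have equ := N_Wy' H oC qY uB qC uC.
apply: NNPP => /negP nqu'.
have euq : e u q by rewrite esym.
have [C' oC' sC'] := get_other (cb_P3 euq euu' nqu') (v := q) (w := u)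
   ltac:(by rewrite !inE eqxx ?orbT) ltac:(by rewrite (inB _ hP) qY orbT)
   ltac:(by rewrite !inE eqxx) uB.
have uC' : u \in C' by rewrite (subsetP sC') // !inE eqxx ?orbT.
have u'C' : u' \in C' by rewrite (subsetP sC') // !inE eqxx ?orbT.
apply: (triF (other_cb oC') uC' u'C' (N_allb H oC') euu').
- by rewrite esym (N_nbw H uB).
- by rewrite esym (N_nbw H u'B).
Qed.

Lemma N_Windep X Y b D1 D2 y2 u u' : ntS X Y b D1 D2 y2 -> u \notin B -> u' \notin B ->
  e u u' = false.
Proof.
move=> H uB u'B; have H' := H; unnt H'; apply/negP => euu'.
have helper : forall p q, p \notin B -> q \notin B -> p \in D1 -> p \notin D2 ->
    q \in D2 -> e p q -> False.
  move=> p q pB qB pD1 pD2 qD2 epq.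
  have [_ hq] := N_core H oD2 qB pB ltac:(by rewrite esym) qD2.
  move: (N_Wy H y2Y pB (hq _ y2Y y2D2)).
  by rewrite (negbTE y2D1) (negbTE pD2) andbF.
case/orP: (N_allin H uB) => uD.
- have [u'n1 _] := N_core H oD1 uB u'B euu' uD.
  have u'D2 : u' \in D2 by move: (N_allin H u'B); rewrite (negbTE u'n1).
  have [un2 _] := N_core H oD2 u'B uB ltac:(by rewrite esym) u'D2.
  exact: helper uB u'B uD un2 u'D2 euu'.
- have [u'n2 _] := N_core H oD2 uB u'B euu' uD.
  have u'D1 : u' \in D1 by move: (N_allin H u'B); rewrite (negbTE u'n2) orbF.
  have [un1 _] := N_core H oD1 u'B uB ltac:(by rewrite esym) u'D1.
  exact: helper u'B uB u'D1 u'n2 uD ltac:(by rewrite esym).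
Qed.

Lemma card_pat (A : {set T}) (P : {set bool * bool}) (f : T -> bool * bool) :
  {in A &, injective f} -> (forall v, v \in A -> f v \in P) -> #|A| <= #|P|.
Proof.
move=> inj hP; rewrite -(card_in_imset inj); apply: subset_leq_card.
by apply/subsetP => p /imsetP[v vA ->]; apply: hP.
Qed.

Lemma card_C1 (p : bool * bool) : #|~: [set p]| = 3.
Proof. by rewrite cardsCs setCK cards1 card_prod card_bool. Qed.

Lemma card_all4 : #|[set: bool * bool]| = 4.
Proof. by rewrite cardsT card_prod card_bool. Qed.

Lemma card_2le (p q : bool * bool) : #|[set p; q]| <= 2.
Proof. by rewrite cards2; case: (p != q). Qed.

Lemma arith n a b ka kb : 7 <= n -> n <= 1 + a + b -> a <= ka -> b <= kb -> ka + kb <= 5 -> False.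
Proof. lia. Qed.

Lemma N_count X Y b D1 D2 y2 : ntS X Y b D1 D2 y2 -> False.
Proof.
move=> H; have H' := H; unnt H'.
pose pat v := (v \in D1, v \in D2).
have ebY : forall y, y \in Y -> e y b by move=> y yY; rewrite esym (pXY hP bX yY).
have patY : {in Y &, injective pat}.
  move=> y y' yY y'Y [h1 h2]; apply: twinE => s.
  case sB : (s \in B).
  - move: sB; rewrite (inB _ hP) => /orP[] hs.
    + by rewrite (hX _ hs) (ebY _ yY) (ebY _ y'Y).
    + by rewrite (negbTE (pYi hP yY hs)) (negbTE (pYi hP y'Y hs)).
  - by rewrite (N_eYout H yY (negbT sB)) (N_eYout H y'Y (negbT sB)) h1 h2.
have patW : {in ~: B &, injective pat}.
  move=> u u'; rewrite !inE => uB u'B [h1 h2]; apply: twinE => s.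
  case sB : (s \in B).
  - move: sB; rewrite (inB _ hP) => /orP[] hs.
    + by rewrite (hX _ hs) (esym u b) (esym u' b) (N_nbw H uB) (N_nbw H u'B).
    + by rewrite (esym u s) (esym u' s) (N_eYout H hs uB) (N_eYout H hs u'B) h1 h2.
  - by rewrite (N_Windep H uB (negbT sB)) (N_Windep H u'B (negbT sB)).
have cT : #|T| <= 1 + #|Y| + #|~: B|.
  have := cardsC B; have : #|B| <= #|X| + #|Y| by rewrite (pB hP); exact: cardU_le.
  have : #|X| <= 1 by apply: card_le1 => a a' /hX-> /hX->.
  lia.
have inW : forall u, u \in ~: B -> (u \in D1) || (u \in D2).
  by move=> u; rewrite inE => uB; exact: N_allin H uB.
case: (boolP [exists r, (r \notin B) && (r \in D1) && (r \in D2)]).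
- case/existsP => r /andP[/andP[rB rD1] rD2].
  pose Q := Y :&: (D1 :|: D2).
  have cbQ : cb ([set b; r] :|: Q).
    apply: cb_parts.
    + by exists b; rewrite !inE eqxx.
    + by exists y2; rewrite !inE y2Y y2D2 orbT.
    + by apply: ind2; rewrite (N_nbw H rB).
    + by move=> p q; rewrite !inE => /andP[pY _] /andP[qY _]; exact: (pYi hP pY qY).
    + move=> p q; rewrite !inE => /orP[]/eqP-> /andP[qY qD].
      * by rewrite (pXY hP bX qY).
      * by rewrite esym; case/orP: qD => qD; [exact: N_Wy' H oD1 qY rB qD rD1|
                                             exact: N_Wy' H oD2 qY rB qD rD2].
  have [C oC sC] := get_other cbQ (v := b) (w := r) ltac:(by rewrite !inE eqxx)
     ltac:(by rewrite (inB _ hP) bX) ltac:(by rewrite !inE eqxx orbT) rB.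
  have y2C : y2 \in C by rewrite (subsetP sC) // !inE y2Y y2D2 /= !orbT.
  have hsub : forall y, y \in Y -> y \in D1 -> y \in D2.
    move=> y0 y0Y y0D1.
    case: (pick2 oD1 oD2 nD oC) => eC; first by move: y2D1; rewrite -eC y2C.
    by rewrite -eC (subsetP sC) // !inE y0Y y0D1 /= !orbT.
  have cY : #|Y| <= 3.
    rewrite -(card_C1 (true, false)); apply: (card_pat patY) => y yY.
    rewrite !inE /pat; apply/eqP => -[h1 h2]; move: h2.
    by rewrite (hsub _ yY h1).
  have cW : #|~: B| <= 2.
    apply: (leq_trans _ (card_2le (true, false) (true, true))); apply: (card_pat patW).
    move=> u uW; rewrite !inE /pat.
    case uD1 : (u \in D1); first by case: (u \in D2).
    exfalso; have uD2 : u \in D2 by move: (inW _ uW); rewrite uD1.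
    move: uW; rewrite inE => uB.
    have eur : u = r.
      apply: twinE => s; case sB : (s \in B).
      - move: sB; rewrite (inB _ hP) => /orP[] hs.
        + by rewrite (hX _ hs) (esym u b) (esym r b) (N_nbw H uB) (N_nbw H rB).
        + rewrite (esym u s) (esym r s) (N_eYout H hs uB) (N_eYout H hs rB) uD1 uD2 rD1 rD2.
          by case sD1 : (s \in D1) => //=; rewrite (hsub _ hs sD1).
      - by rewrite (N_Windep H uB (negbT sB)) (N_Windep H rB (negbT sB)).
    by move: uD1; rewrite eur rD1.
  exact: arith e7 cT cY cW isT.
- move/existsPn => hr.
  have nr : forall u, u \notin B -> u \in D1 -> u \in D2 -> False.
    by move=> u uB u1 u2; move: (hr u); rewrite uB u1 u2.
  case: (boolP [exists y, (y \in Y) && (y \in D1) && (y \in D2)]).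
  + case/existsP => y11 /andP[/andP[y11Y y11D1] y11D2].
    case: (boolP [exists p, (p \notin B) && (p \in D1)]).
    * case/existsP => p /andP[pB pD1].
      case: (boolP [exists q, (q \notin B) && (q \in D2)]).
      -- case/existsP => q /andP[qB qD2].
         have cbS : cb ([set y11] :|: [set b; p; q]).
           apply: cb_parts.
           ++ by exists y11; rewrite !inE eqxx.
           ++ by exists b; rewrite !inE eqxx.
           ++ exact: ind1.
           ++ by apply: ind3; rewrite ?(N_nbw H pB) ?(N_nbw H qB) ?(N_Windep H pB qB).
           ++ move=> y' v; rewrite !inE => /eqP-> /orP[/orP[]|]/eqP->.
              ** exact: ebY.
              ** exact: N_Wy' H oD1 y11Y pB y11D1 pD1.
              ** exact: N_Wy' H oD2 y11Y qB y11D2 qD2.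
         have [C oC sC] := get_other cbS (v := y11) (w := p) ltac:(by rewrite !inE eqxx)
            ltac:(by rewrite (inB _ hP) y11Y orbT) ltac:(by rewrite !inE eqxx !orbT) pB.
         have pC : p \in C by rewrite (subsetP sC) // !inE eqxx !orbT.
         have qC : q \in C by rewrite (subsetP sC) // !inE eqxx !orbT.
         case: (pick2 oD1 oD2 nD oC) => eC; rewrite eC in pC qC.
         ++ exact: nr qB qC qD2.
         ++ exact: nr pB pD1 pC.
      -- move/existsPn => hq.
         have cY : #|Y| <= 4 by rewrite -card_all4; apply: (card_pat patY) => y _; rewrite inE.
         have cW : #|~: B| <= 1.
           rewrite -(cards1 (true, false)); apply: (card_pat patW) => u uW.
           move: (inW _ uW) (hq u); rewrite !inE /pat; move: uW; rewrite inE => -> /=.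
           by case: (u \in D1); case: (u \in D2).
         exact: arith e7 cT cY cW isT.
    * move/existsPn => hp.
      have cY : #|Y| <= 4 by rewrite -card_all4; apply: (card_pat patY) => y _; rewrite inE.
      have cW : #|~: B| <= 1.
        rewrite -(cards1 (false, true)); apply: (card_pat patW) => u uW.
        move: (inW _ uW) (hp u); rewrite !inE /pat; move: uW; rewrite inE => -> /=.
        by case: (u \in D1); case: (u \in D2).
      exact: arith e7 cT cY cW isT.
  + move/existsPn => hy.
    have cY : #|Y| <= 3.
      rewrite -(card_C1 (true, true)); apply: (card_pat patY) => y yY.
      rewrite !inE /pat; apply/eqP => -[h1 h2]; move: (hy y).
      by rewrite yY h1 h2.
    have cW : #|~: B| <= 2.
      apply: (leq_trans _ (card_2le (true, false) (false, true))); apply: (card_pat patW).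
      move=> u uW; move: (inW _ uW); rewrite !inE /pat.
      move: uW; rewrite inE => uB.
      case u1 : (u \in D1); case u2 : (u \in D2) => //.
      by move: (nr _ uB u1 u2).
    exact: arith e7 cT cY cW isT.
Qed.

Lemma NT_main X Y b y1 y2 w1 w2 : parts X Y -> NT X Y -> b \in X ->
  (forall a, a \in X -> a = b) -> y1 \in Y -> y2 \in Y -> w1 \notin B -> e y1 w1 ->
  ~~ e y2 w1 -> w2 \notin B -> e y2 w2 -> False.
Proof.
move=> hP hNT bX hX y1Y y2Y w1B ey1w1 ny2w1 w2B ey2w2.
have nbw : forall w, w \notin B -> ~~ e b w.
  move=> w wB; rewrite (NT_nbB _ hP hNT bX hX).
  by apply/negP => wY; move: wB; rewrite (inB _ hP) wY orbT.
have ey1b : e y1 b by rewrite esym (pXY hP bX y1Y).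
have ey2b : e y2 b by rewrite esym (pXY hP bX y2Y).
have [D1 oD1 sD1] := get_other (cb_P3 ey1b ey1w1 (nbw _ w1B)) (v := y1) (w := w1)
   ltac:(by rewrite !inE eqxx) ltac:(by rewrite (inB _ hP) y1Y orbT)
   ltac:(by rewrite !inE eqxx !orbT) w1B.
have [D2 oD2 sD2] := get_other (cb_P3 ey2b ey2w2 (nbw _ w2B)) (v := y2) (w := w2)
   ltac:(by rewrite !inE eqxx) ltac:(by rewrite (inB _ hP) y2Y orbT)
   ltac:(by rewrite !inE eqxx !orbT) w2B.
have y1D1 : y1 \in D1 by rewrite (subsetP sD1) // !inE eqxx.
have w1D1 : w1 \in D1 by rewrite (subsetP sD1) // !inE eqxx !orbT.
have bD1 : b \in D1 by rewrite (subsetP sD1) // !inE eqxx !orbT.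
have y2D2 : y2 \in D2 by rewrite (subsetP sD2) // !inE eqxx.
have bD2 : b \in D2 by rewrite (subsetP sD2) // !inE eqxx !orbT.
have y2D1 : y2 \notin D1.
  apply/negP => h; apply: (triF (other_cb oD1) y1D1 w1D1 h ey1w1).
  - exact: (pYi hP y1Y y2Y).
  - by rewrite esym.
have nD : D1 != D2 by apply/eqP => h; move: y2D1; rewrite h y2D2.
exact: (@N_count X Y b D1 D2 y2).
Qed.

Lemma NT_II X Y b : parts X Y -> NT X Y -> b \in X -> (forall a, a \in X -> a = b) ->
  exists a c, [/\ Y = [set a; c], a != c, nbhd e a = [set b] & nbhd e b = [set a; c]].
Proof.
move=> hP hNT bX hX.
have nbB : forall t, e b t = (t \in Y) by move=> t; exact: (NT_nbB _ hP hNT bX hX).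
have outB : forall v t, v \in Y -> e v t -> t != b -> t \notin B.
  move=> v t vY evt tb; rewrite (inB _ hP); apply/negP => /orP[] ht.
  - by move: tb; rewrite (hX _ ht) eqxx.
  - by move: evt; rewrite (negbTE (pYi hP vY ht)).
pose has v := [exists t, e v t && (t != b)].
have noout : forall v t, v \in Y -> ~~ has v -> e v t = (t == b).
  move=> v t vY /existsPn /(_ t); case: eqP => [->|_]; first by rewrite esym nbB vY.
  by rewrite andbT => /negbTE.
have i1 : forall v v', v \in Y -> v' \in Y -> ~~ has v -> ~~ has v' -> v = v'.
  by move=> v v' vY v'Y h h'; apply: twinE => t; rewrite (noout _ _ vY h) (noout _ _ v'Y h').
have i2 : forall v v', v \in Y -> v' \in Y -> v != v' -> has v -> has v' -> False.
  suff gen : forall v v' t w', v \in Y -> v' \in Y -> e v t -> ~~ e v' t -> e v' w' ->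
      w' != b -> False.
    move=> v v' vY v'Y nvv' /existsP[w /andP[evw wb]] /existsP[w' /andP[ev'w' w'b]].
    case: (twin_dist nvv') => t [/andP[h1 h2]|/andP[h1 h2]].
    - exact: gen vY v'Y h1 h2 ev'w' w'b.
    - exact: gen v'Y vY h1 h2 evw wb.
  move=> v v' t w' vY v'Y evt nv't ev'w' w'b.
  have tb : t != b by apply/eqP => tb; move: nv't; rewrite tb esym nbB v'Y.
  exact: NT_main hP hNT bX hX vY v'Y (outB _ _ vY evt tb) evt nv't (outB _ _ v'Y ev'w' w'b) ev'w'.
have [y yY] := pY hP.
have [y' y'Y ny] : exists2 y', y' \in Y & y' != y.
  apply: NNPP => hn.
  have hY : forall v, v \in Y -> v = y.
    by move=> v vY; apply: NNPP => nv; apply: hn; exists v => //; apply/eqP.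
  have noy : ~~ has y.
    apply/existsPn => t; apply/negP => /andP[eyt tb].
    have tB := outB _ _ yY eyt tb.
    apply: (maxB (parts_sym hP) tB).
    + by move=> a /hY ->; rewrite esym.
    + move=> a /hX ->; rewrite esym nbB; apply/negP => tY.
      by move: tB; rewrite (inB _ hP) tY orbT.
  have clA : forall u t, u \in [set b; y] -> e u t -> t \in [set b; y].
    move=> u t; rewrite !inE => /orP[]/eqP-> h.
    - by move: h; rewrite nbB => /hY ->; rewrite eqxx orbT.
    - by move: h; rewrite (noout _ _ yY noy) => ->.
  have := closure_card (a := b) (A := [set b; y]) ltac:(by rewrite !inE eqxx) clA.
  rewrite cards2 => h; move: e7 h; case: (b != y) => /=; lia.
have fin : forall a c, a \in Y -> c \in Y -> a != c -> ~~ has a -> has c ->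
    exists a c, [/\ Y = [set a; c], a != c, nbhd e a = [set b] & nbhd e b = [set a; c]].
  move=> a c aY cY nac ha hc.
  have eY : Y = [set a; c].
    apply/setP => v; rewrite !inE; apply/idP/idP.
    - move=> vY; case hv : (has v).
      + case: (eqVneq v c) => [->|nvc]; first by rewrite ?eqxx ?orbT.
        by exfalso; exact: i2 vY cY nvc hv hc.
      + by rewrite (i1 _ _ vY aY (negbT hv) ha) eqxx.
    - by case/orP => /eqP->.
  exists a, c; split => //.
  - by apply/setP => t; rewrite !inE (noout _ _ aY ha).
  - by apply/setP => t; rewrite !inE nbB eY !inE.
case hy : (has y); case hy' : (has y').
- by exfalso; apply: (i2 y y' yY y'Y _ hy hy'); rewrite eq_sym.
- by apply: (fin y' y) => //; rewrite ?hy'.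
- by apply: (fin y y') => //; rewrite ?hy // eq_sym.
- by move: ny; rewrite (i1 _ _ yY y'Y (negbT hy) (negbT hy')) eqxx.
Qed.

Record halfS X Y D1 D2 xb yb : Prop := HalfS {
  hP_ : parts X Y; hNT_ : NT X Y; hD1 : other D1; hD2 : other D2; hD : D1 != D2;
  hYD1 : forall y, y \in Y -> y \in D1; hXD2 : forall x, x \in X -> x \in D2;
  hxb : xb \in X; hyb : yb \in Y;
  hxbo : forall s, s \notin B -> ~~ e xb s; hybo : forall s, s \notin B -> ~~ e yb s }.

Lemma halfS_sym X Y D1 D2 xb yb : halfS X Y D1 D2 xb yb -> halfS Y X D2 D1 yb xb.
Proof.
case=> *; split => //; [exact: parts_sym|exact: NT_sym|by rewrite eq_sym].
Qed.

Ltac unhalf H := case: (H) => hP hNT oD1 oD2 nD YD1 XD2 xbX ybY xbo ybo.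

Lemma cb_starY X Y x s : parts X Y -> NT X Y -> x \in X -> s \notin B -> e x s ->
  cb ([set x] :|: (s |: Y)).
Proof.
move=> hP hNT xX sB exs.
have nsY : forall y, y \in Y -> ~~ e s y.
  by move=> y yY; apply/negP => esy; apply: (hNT s x y sB xX yY) => //; rewrite esym.
apply: cb_parts.
- by exists x; rewrite inE.
- by exists s; rewrite !inE eqxx.
- exact: ind1.
- move=> a a'; rewrite !inE => /orP[/eqP->|aY] /orP[/eqP->|a'Y].
  + by rewrite eirr.
  + exact: nsY.
  + by rewrite esym nsY.
  + exact: (pYi hP aY a'Y).
- move=> a a'; rewrite !inE => /eqP-> /orP[/eqP->//|a'Y]; exact: (pXY hP xX a'Y).
Qed.

Lemma h1_raw X Y D1 D2 x s : parts X Y -> NT X Y -> other D1 -> other D2 -> D1 != D2 ->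
  (forall x', x' \in X -> x' \in D2) -> x \in X -> s \notin B -> e x s ->
  x \in D1 /\ s \in D1.
Proof.
move=> hP hNT oD1 oD2 nD XD2 xX sB exs.
have nsY : forall y, y \in Y -> ~~ e s y.
  by move=> y yY; apply/negP => esy; apply: (hNT s x y sB xX yY) => //; rewrite esym.
have [x' x'X nsx'] : exists2 x', x' \in X & ~~ e s x'.
  apply: NNPP => hn; apply: (maxB hP sB _ nsY) => a aX.
  by apply: NNPP => /negP h; apply: hn; exists a.
have [C oC sC] := get_other (cb_starY hP hNT xX sB exs) (v := x) (w := s)
   ltac:(by rewrite !inE eqxx) ltac:(by rewrite (inB _ hP) xX)
   ltac:(by rewrite !inE eqxx !orbT) sB.
have xC : x \in C by rewrite (subsetP sC) // !inE eqxx.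
have sC' : s \in C by rewrite (subsetP sC) // !inE eqxx !orbT.
case: (pick2 oD1 oD2 nD oC) => eC; rewrite eC in xC sC'; first by [].
exfalso; apply: (triF (other_cb oD2) xC sC' (XD2 _ x'X) exs) => //.
exact: (pXi hP xX x'X).
Qed.

Lemma H_h1 X Y D1 D2 xb yb x s : halfS X Y D1 D2 xb yb -> x \in X -> s \notin B -> e x s ->
  x \in D1 /\ s \in D1.
Proof.
move=> H xX sB exs; case: (H) => hP hNT oD1 oD2 nD _ XD2 _ _ _ _.
exact: (h1_raw hP hNT oD1 oD2 nD XD2 xX sB exs).
Qed.

Lemma H_h2 X Y D1 D2 xb yb x s x' : halfS X Y D1 D2 xb yb -> x \in X -> s \notin B -> e x s ->
  x' \in X -> x' != xb -> e s x'.
Proof.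
move=> H xX sB exs x'X nx'; have H' := H; unhalf H'.
apply: NNPP => /negP nsx'.
have [xD1 sD1] := H_h1 H xX sB exs.
have nout : forall s', s' \notin B -> ~~ e x' s'.
  move=> s' s'B; apply/negP => ex's'.
  have [x'D1 _] := H_h1 H x'X s'B ex's'.
  exact: (triF (other_cb oD1) xD1 sD1 x'D1 exs (pXi hP xX x'X) nsx').
move: nx'; rewrite (_ : x' = xb) ?eqxx //; apply: twinE => q.
case qB : (q \in B).
- move: qB; rewrite (inB _ hP) => /orP[] hq.
  + by rewrite (negbTE (pXi hP x'X hq)) (negbTE (pXi hP xbX hq)).
  + by rewrite (pXY hP x'X hq) (pXY hP xbX hq).
- by rewrite (negbTE (nout _ (negbT qB))) (negbTE (xbo _ (negbT qB))).
Qed.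

Lemma H_h3 X Y D1 D2 xb yb : halfS X Y D1 D2 xb yb -> #|X| <= 2.
Proof.
move=> H; have H' := H; unhalf H'.
apply: (card_le2 (x := xb)) => a a' aX a'X na na'; apply: twinE => q.
case qB : (q \in B).
- move: qB; rewrite (inB _ hP) => /orP[] hq.
  + by rewrite (negbTE (pXi hP aX hq)) (negbTE (pXi hP a'X hq)).
  + by rewrite (pXY hP aX hq) (pXY hP a'X hq).
- apply/idP/idP => h.
  + by rewrite esym (H_h2 H aX (negbT qB) h a'X na').
  + by rewrite esym (H_h2 H a'X (negbT qB) h aX na).
Qed.

Lemma H_h4 X Y D1 D2 xb yb x s s' : halfS X Y D1 D2 xb yb -> x \in X -> s \notin B -> e x s ->
  s' \notin B -> ~~ e s s'.
Proof.
move=> H xX sB exs s'B; have H' := H; unhalf H'; apply/negP => ess'.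
have [xD1 sD1] := H_h1 H xX sB exs.
have nsY : forall y, y \in Y -> ~~ e s y.
  by move=> y yY; apply/negP => esy; apply: (hNT s x y sB xX yY) => //; rewrite esym.
case exs' : (e x s').
- have [_ s'D1] := H_h1 H xX s'B exs'.
  exact: (triT (other_cb oD1) xD1 sD1 s'D1 exs exs' ess').
- have esx : e s x by rewrite esym.
  have [C oC sC] := get_other (cb_P3 esx ess' (negbT exs')) (v := x) (w := s)
     ltac:(by rewrite !inE eqxx ?orbT) ltac:(by rewrite (inB _ hP) xX)
     ltac:(by rewrite !inE eqxx) sB.
  have xC : x \in C by rewrite (subsetP sC) // !inE eqxx ?orbT.
  have sC' : s \in C by rewrite (subsetP sC) // !inE eqxx ?orbT.
  have s'C : s' \in C by rewrite (subsetP sC) // !inE eqxx ?orbT.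
  case: (pick2 oD1 oD2 nD oC) => eC; rewrite eC in xC sC' s'C.
  + apply: (triF (other_cb oD1) sC' s'C (YD1 _ ybY) ess' (nsY _ ybY)).
    by rewrite esym ybo.
  + apply: (triF (other_cb oD2) xC sC' (XD2 _ xbX) exs (pXi hP xX xbX)).
    by rewrite esym xbo.
Qed.

Lemma H_h5 X Y D1 D2 xb yb x s x' s' : halfS X Y D1 D2 xb yb -> x \in X -> s \notin B ->
  e x s -> x' \in X -> s' \notin B -> e x' s' -> s = s'.
Proof.
move=> H xX sB exs x'X s'B ex's'; have H' := H; unhalf H'; apply: twinE => q.
case qB : (q \in B).
- move: qB; rewrite (inB _ hP) => /orP[] hq.
  + case: (eqVneq q xb) => [->|nq].
    * by rewrite !(esym _ xb) (negbTE (xbo _ sB)) (negbTE (xbo _ s'B)).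
    * by rewrite (H_h2 H xX sB exs hq nq) (H_h2 H x'X s'B ex's' hq nq).
  + have n1 : e s q = false.
      by apply/negP => h; apply: (hNT s x q sB xX hq) => //; rewrite esym.
    have n2 : e s' q = false.
      by apply/negP => h; apply: (hNT s' x' q s'B x'X hq) => //; rewrite esym.
    by rewrite n1 n2.
- by rewrite (negbTE (H_h4 H xX sB exs (negbT qB))) (negbTE (H_h4 H x'X s'B ex's' (negbT qB))).
Qed.

Lemma arith2 n a b c x y : 7 <= n -> n <= a -> a <= b + c -> c <= 2 -> b <= x + y ->
  x <= 2 -> y <= 2 -> False.
Proof. lia. Qed.

Lemma card_2le' (a b : T) : #|[set a; b]| <= 2.
Proof. by rewrite cards2; case: (a != b). Qed.

Lemma NT_III' X Y xa xb t ya yb u : parts X Y -> NT X Y -> xa \in X -> xb \in X ->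
  e xa t -> ~~ e xb t -> ya \in Y -> yb \in Y -> e ya u -> ~~ e yb u -> False.
Proof.
move=> hP hNT xaX xbX ext nxbt yaY ybY eyu nybu.
have tB : t \notin B.
  rewrite (inB _ hP); apply/negP => /orP[] ht.
  - by move: ext; rewrite (negbTE (pXi hP xaX ht)).
  - by move: nxbt; rewrite (pXY hP xbX ht).
have uB : u \notin B.
  rewrite (inB _ hP); apply/negP => /orP[] hu.
  - by move: nybu; rewrite esym (pXY hP hu ybY).
  - by move: eyu; rewrite (negbTE (pYi hP yaY hu)).
have hP' := parts_sym hP; have hNT' := NT_sym hNT.
have [C1 oC1 sC1] := get_other (cb_starY hP hNT xaX tB ext) (v := xa) (w := t)
   ltac:(by rewrite !inE eqxx) ltac:(by rewrite (inB _ hP) xaX)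
   ltac:(by rewrite !inE eqxx !orbT) tB.
have [C2 oC2 sC2] := get_other (cb_starY hP' hNT' yaY uB eyu) (v := ya) (w := u)
   ltac:(by rewrite !inE eqxx) ltac:(by rewrite (inB _ hP) yaY orbT)
   ltac:(by rewrite !inE eqxx !orbT) uB.
have YC1 : forall y, y \in Y -> y \in C1 by move=> y yY; rewrite (subsetP sC1) // !inE yY !orbT.
have XC2 : forall x, x \in X -> x \in C2 by move=> x xX; rewrite (subsetP sC2) // !inE xX !orbT.
have xaC1 : xa \in C1 by rewrite (subsetP sC1) // !inE eqxx.
have tC1 : t \in C1 by rewrite (subsetP sC1) // !inE eqxx !orbT.
have yaC2 : ya \in C2 by rewrite (subsetP sC2) // !inE eqxx.
have uC2 : u \in C2 by rewrite (subsetP sC2) // !inE eqxx !orbT.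
have xbC1 : xb \notin C1.
  apply/negP => h; apply: (triF (other_cb oC1) xaC1 tC1 h ext (pXi hP xaX xbX)).
  by rewrite esym.
have ybC2 : yb \notin C2.
  apply/negP => h; apply: (triF (other_cb oC2) yaC2 uC2 h eyu (pYi hP yaY ybY)).
  by rewrite esym.
have nC : C1 != C2 by apply/eqP => h; move: xbC1; rewrite h XC2.
have xbo : forall s, s \notin B -> ~~ e xb s.
  move=> s sB; apply/negP => h.
  by have [] := h1_raw hP hNT oC1 oC2 nC XC2 xbX sB h; rewrite (negbTE xbC1).
have ybo : forall s, s \notin B -> ~~ e yb s.
  move=> s sB; apply/negP => h.
  have nC' : C2 != C1 by rewrite eq_sym.
  by have [] := h1_raw hP' hNT' oC2 oC1 nC' YC1 ybY sB h; rewrite (negbTE ybC2).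
have H : halfS X Y C1 C2 xb yb by split.
have H' := halfS_sym H.
pose A := B :|: [set t; u].
have clA : forall v q, v \in A -> e v q -> q \in A.
  move=> v q; rewrite /A !inE => hv evq.
  case qB : (q \in B) => //=.
  case vB : (v \in B).
  - move: vB; rewrite (inB _ hP) => /orP[] hv'.
    + by rewrite -(H_h5 H xaX tB ext hv' (negbT qB) evq) eqxx.
    + by rewrite -(H_h5 H' yaY uB eyu hv' (negbT qB) evq) eqxx orbT.
  - move: hv; rewrite vB /= => /orP[]/eqP ev; rewrite ev in evq.
    + by move: (H_h4 H xaX tB ext (negbT qB)); rewrite evq.
    + by move: (H_h4 H' yaY uB eyu (negbT qB)); rewrite evq.
have := closure_card (a := t) (A := A) ltac:(by rewrite !inE eqxx orbT) clA.
have cX := H_h3 H; have cY := H_h3 H'.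
have cB : #|B| <= #|X| + #|Y| by rewrite (pB hP); apply: cardU_le.
have := cardU_le B [set t; u]; have := card_2le' t u.
move=> h1 h2 h3; rewrite /A in h3.
exact: (arith2 e7 h3 h2 h1 cB cX cY).
Qed.

Lemma NT_III X Y x0 x1 y0 y1 : parts X Y -> NT X Y -> x0 \in X -> x1 \in X -> x0 != x1 ->
  y0 \in Y -> y1 \in Y -> y0 != y1 -> False.
Proof.
move=> hP hNT x0X x1X nx y0Y y1Y ny.
have [t ht] := twin_dist nx; have [u hu] := twin_dist ny.
case: ht => /andP[h1 h2]; case: hu => /andP[h3 h4].
- exact: NT_III' hP hNT x0X x1X h1 h2 y0Y y1Y h3 h4.
- exact: NT_III' hP hNT x0X x1X h1 h2 y1Y y0Y h3 h4.
- exact: NT_III' hP hNT x1X x0X h1 h2 y0Y y1Y h3 h4.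
- exact: NT_III' hP hNT x1X x0X h1 h2 y1Y y0Y h3 h4.
Qed.

Lemma fin2 X Y b a c : parts X Y -> b \in X -> (forall v, v \in X -> v = b) ->
  Y = [set a; c] -> a != c -> nbhd e a = [set b] -> nbhd e b = [set a; c] ->
  [/\ B = [set a; b; c], e a b, e b c & ~~ e a c] /\
  [/\ a != c, nbhd e a = [set b] & nbhd e b = [set a; c]].
Proof.
move=> hP bX hX eY nac na nb.
have eab : e a b by have := na; move/setP => /(_ b); rewrite /nbhd !inE eqxx.
have ebc : e b c by have := nb; move/setP => /(_ c); rewrite /nbhd !inE eqxx orbT.
split; split => //.
- apply/setP => v; rewrite (inB _ hP) eY !inE; apply/idP/idP.
  + by case/orP => [/hX->|/orP[]->]; rewrite ?eqxx ?orbT.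
  + by case/orP => [/orP[]|] /eqP->; rewrite ?bX ?eqxx ?orbT.
- apply/negP => eac; have := na; move/setP => /(_ c); rewrite /nbhd !inE eac => /eqsym_b/eqP ecb.
  by move: ebc; rewrite ecb eirr.
Qed.

Lemma main_sec :
  (exists v w x : T,
     [/\ B = [set v; w], e v w, x != v & x != w] /\
     [/\ cnbhd e v = [set v; w; x], cnbhd e w = [set v; w; x] &
         independent e (nbhd e x :\: [set v; w])])
  \/
  (exists a b c : T,
     [/\ B = [set a; b; c], e a b, e b c & ~~ e a c] /\
     [/\ a != c, nbhd e a = [set b] & nbhd e b = [set a; c]]).
Proof.
have [[X [Y [[X0 Y0 _ eB] [iX iY cXY]]]] _] := Bbic.
have hP : parts X Y.
  by split => //; [case/set0Pn: X0 => v vX; exists v|case/set0Pn: Y0 => v vY; exists v].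
have [x xX] := pX hP; have [y yY] := pY hP.
case: (classic (exists z x y, [/\ z \notin B, x \in X, y \in Y, e z x & e z y])).
- case=> z [x0 [y0 [zB x0X y0Y ezx ezy]]].
  have exz : e x0 z by rewrite esym.
  have eyz : e y0 z by rewrite esym.
  have [Dx oDx sDx] := get_other (cb_edge exz) (v := x0) (w := z) ltac:(by rewrite !inE eqxx)
     ltac:(by rewrite (inB _ hP) x0X) ltac:(by rewrite !inE eqxx orbT) zB.
  have [Dy oDy sDy] := get_other (cb_edge eyz) (v := y0) (w := z) ltac:(by rewrite !inE eqxx)
     ltac:(by rewrite (inB _ hP) y0Y orbT) ltac:(by rewrite !inE eqxx orbT) zB.
  have xDx : x0 \in Dx by rewrite (subsetP sDx) // !inE eqxx.
  have zDx : z \in Dx by rewrite (subsetP sDx) // !inE eqxx orbT.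
  have yDy : y0 \in Dy by rewrite (subsetP sDy) // !inE eqxx.
  have zDy : z \in Dy by rewrite (subsetP sDy) // !inE eqxx orbT.
  have nD : Dx != Dy.
    apply/eqP => h; rewrite h in xDx zDx.
    by apply: (triT (other_cb oDy) xDx yDy zDx (pXY hP x0X y0Y)); rewrite esym.
  have H : triS X Y x0 y0 z Dx Dy by split.
  case: (classic (exists y', y' \in Y /\ y' != y0)) => [[y' [y'Y ny]]|hY].
    by exfalso; exact: T_contra H y'Y ny.
  case: (classic (exists x', x' \in X /\ x' != x0)) => [[x' [x'X nx]]|hX].
    by exfalso; exact: T_contra (triS_sym H) x'X nx.
  left; exists x0, y0, z; apply: (T_K11 H).
  + by move=> a aX; apply: NNPP => na; apply: hX; exists a; split => //; apply/eqP.
  + by move=> a aY; apply: NNPP => na; apply: hY; exists a; split => //; apply/eqP.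
- move=> hT.
  have hNT : NT X Y.
    by move=> t a b tB aX bY eta etb; apply: hT; exists t, a, b.
  case: (classic (exists x', x' \in X /\ x' != x)) => [[x' [x'X nx]]|hX].
  + case: (classic (exists y', y' \in Y /\ y' != y)) => [[y' [y'Y ny]]|hY].
      by exfalso; exact: NT_III hP hNT x'X xX nx y'Y yY ny.
    have hY' : forall v, v \in Y -> v = y.
      by move=> a aY; apply: NNPP => na; apply: hY; exists a; split => //; apply/eqP.
    have [a [c [eX nac na nb]]] := NT_II (parts_sym hP) (NT_sym hNT) yY hY'.
    right; exists a, y, c; exact: fin2 (parts_sym hP) yY hY' eX nac na nb.
  + have hX' : forall v, v \in X -> v = x.
      by move=> a aX; apply: NNPP => na; apply: hX; exists a; split => //; apply/eqP.
    have [a [c [eY nac na nb]]] := NT_II hP hNT xX hX'.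
    right; exists a, x, c; exact: fin2 hP xX hX' eY nac na nb.
Qed.

End Main.


Theorem lemma4 (T : finType) (e : rel T) (B : {set T}) :
  simple_graph e -> graph_connected e -> false_twin_free e -> 7 <= #|T| ->
  biclique e B -> kb_degree e B 2 ->
  (exists v w x : T,
     [/\ B = [set v; w], e v w, x != v & x != w] /\
     [/\ cnbhd e v = [set v; w; x], cnbhd e w = [set v; w; x] &
         independent e (nbhd e x :\: [set v; w])])
  \/
  (exists a b c : T,
     [/\ B = [set a; b; c], e a b, e b c & ~~ e a c] /\
     [/\ a != c, nbhd e a = [set b] & nbhd e b = [set a; c]]).
Proof.
move=> [esy eir] econ etw' e7' Bb [S [hS hS2]].
exact: (main_sec esy eir econ etw' Bb hS hS2 e7').
Qed.
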